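(* Let $F:\mathbb{R}^N\times\mathbb{R}\to\mathbb{R}$ be a generating family for a Legendrian knot with $F(x,t)=x_1$ outside a compact subset of $\mathbb{R}^N\times\mathbb{R}$, and let $w(x,y,t)=F(x,t)-F(y,t)$ on $\mathbb{R}^{2N}\times\mathbb{R}$. Then there exists a fiber preserving diffeomorphism $\varphi:\mathbb{R}^{2N}\times\mathbb{R}\to\mathbb{R}^{2N}\times\mathbb{R}$, $\varphi(x,y,t)=(\Phi(x,y,t),t)$, such that $\alpha=w\circ\varphi$ satisfies $\alpha(x,y,t)=x_1-y_1$ outside a compact subset.
   Context: A generating family: a smooth $F:\mathbb{R}^N\times\mathbb{R}\to\mathbb{R}$, $f_t=F(\cdot,t)$, with $0$ a regular value of $(\partial F/\partial x_1,\dots,\partial F/\partial x_N)$; its fiberwise critical set is immersed as a Legendrian curve in $(\mathbb{R}^3,\ker(dz-y\,dx))$ by $(x,t)\mapsto(t,\partial F/\partial t,F)$. Coordinates on $\mathbb{R}^{2N}$ are $(x,y)$ with $x,y\in\mathbb{R}^N$. *)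

(* Defs.v *)
From HB Require Import structures.
From mathcomp Require Import all_boot all_order all_algebra.
From mathcomp Require Import all_classical all_reals all_analysis.
Set Implicit Arguments. Unset Strict Implicit. Unset Printing Implicit Defensive.
Import Order.TTheory GRing.Theory Num.Theory.
Import numFieldNormedType.Exports.
Local Open Scope classical_set_scope.
Local Open Scope ring_scope.

Section Defs.
Variable R : realType.

Fixpoint iterD {V W : normedModType R} (vs : seq V) (f : V -> W) : V -> W :=
  match vs with
  | [::] => f
  | v :: vs' => fun x => derive (iterD vs' f) x v
  end.

Definition smooth {V W : normedModType R} (f : V -> W) : Prop :=
  forall vs : seq V, continuous (iterD vs f) /\ forall x v, derivable (iterD vs f) x v.

Definition diffeomorphism {V : normedModType R} (phi : V -> V) : Prop :=
  exists psi : V -> V, cancel phi psi /\ cancel psi phi /\ smooth phi /\ smooth psi.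

Definition ex {N : nat} (i : 'I_N) : 'rV[R]_N * R := (delta_mx 0 i, 0).
Definition et {N : nat} : 'rV[R]_N * R := (0, 1).

Definition dxF {N : nat} (F : 'rV[R]_N * R -> R) : 'rV[R]_N * R -> 'rV[R]_N :=
  fun p => \row_i derive F p (ex i).

Definition fibcrit {N : nat} (F : 'rV[R]_N * R -> R) : set ('rV[R]_N * R) :=
  [set p | dxF F p = 0].

Definition regular_zero {N : nat} (F : 'rV[R]_N * R -> R) : Prop :=
  forall p, fibcrit F p ->
    forall w : 'rV[R]_N, exists v : 'rV[R]_N * R, derive (dxF F) p v = w.

Definition legmap {N : nat} (F : 'rV[R]_N * R -> R) (p : 'rV[R]_N * R) : R * R * R :=
  (p.2, derive F p et, F p).

(* F is a generating family (smooth, 0 regular value of the x-gradient) whose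
   Legendrian curve is a knot: the critical set is a nonempty connected
   (necessarily 1-dimensional) set on which the Legendrian map is injective. *)
Definition gen_family_knot {N : nat} (F : 'rV[R]_N * R -> R) : Prop :=
  [/\ smooth F, regular_zero F,
      fibcrit F !=set0, connected (fibcrit F)
    & {in fibcrit F &, injective (legmap F)}].

End Defs.

(* Main.v *)
Require Import Defs.
From HB Require Import structures.
From mathcomp Require Import all_boot all_order all_algebra.
From mathcomp Require Import all_classical all_reals all_analysis.
Import Order.TTheory GRing.Theory Num.Theory.
Import numFieldNormedType.Exports.
Local Open Scope classical_set_scope.
Local Open Scope ring_scope.

Section Gen.
Variable R : realType.

Lemma iterD_rcons (V W : normedModType R) (vs : seq V) (f : V -> W) w :
  Defs.iterD vs (fun x => derive f x w) = Defs.iterD (rcons vs w) f.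
Proof. by elim: vs => [//|v vs IH] /=; rewrite IH. Qed.

Lemma smooth_D (V W : normedModType R) (f : V -> W) w :
  smooth f -> smooth (fun x => derive f x w).
Proof. by move=> sf vs; rewrite iterD_rcons; apply: sf. Qed.

Lemma smoothP (V W : normedModType R) (P : (V -> W) -> Prop) :
  (forall f, P f -> [/\ continuous f, (forall x v, derivable f x v) &
     forall v, P (fun x => derive f x v)]) ->
  forall f, P f -> smooth f.
Proof.
move=> H f Pf vs.
suff : P (Defs.iterD vs f) by move=> /H [].
elim: vs => [//|v vs IH] /=.
by have [_ _] := H _ IH; apply.
Qed.

Lemma smooth_cont (V W : normedModType R) (f : V -> W) : smooth f -> continuous f.
Proof. by move=> /(_ [::]) []. Qed.
Lemma smooth_der (V W : normedModType R) (f : V -> W) : smooth f -> forall x v, derivable f x v.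
Proof. by move=> /(_ [::]) []. Qed.

Definition linA (V U : normedModType R) (A : V -> U) :=
  forall (a : R) x y, A (a *: x + y) = a *: A x + A y.

End Gen.
Arguments linA {R V U} A.
Arguments smooth_D {R V W f} w.
Arguments smooth_cont {R V W f}.
Arguments smooth_der {R V W f}.
Arguments smoothP {R V W} P.


Lemma zmod_rearr (M : zmodType) (a b c d : M) : a + b + c = c - d + (a + (b + d)).
Proof. by rewrite (addrC b d) (addrCA a d b) (addrA (c - d)) subrK addrC. Qed.

Lemma zmod_split (M : zmodType) (x y p : M) : x - p = (x - y) + (y - p).
Proof. by rewrite addrA subrK. Qed.

Section Chain.
Variable R : realType.

Lemma line_deriv (U : normedModType R) (G : U -> R) (u y : U) (b : R) :
  derivable G (b *: u + y) u ->
  is_derive b 1 (fun c : R => G (c *: u + y)) (derive G (b *: u + y) u).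
Proof.
move=> dG.
have E : (fun h : R => h^-1 *: (((fun c : R => G (c *: u + y)) \o shift b) (h *: 1) - G (b *: u + y)))
  = (fun h : R => h^-1 *: ((G \o shift (b *: u + y)) (h *: u) - G (b *: u + y))).
  apply/funext => h /=; congr (_ *: (G _ - _)).
  by rewrite [h *: 1]mulr1 scalerDl addrA.
apply: DeriveDef; rewrite /derivable /derive E //.
Qed.

Lemma cont_line (U : normedModType R) (G : U -> R) (u y : U) :
  continuous G -> continuous (fun c : R => G (c *: u + y)).
Proof.
move=> cG c; apply: continuous_comp; last exact: cG.
apply: continuousD; last exact: cvg_cst.
exact: continuousZr_tmp.
Qed.

Lemma mvt_line (U : normedModType R) (G : U -> R) (u y : U) (d : R) :
  smooth G -> exists th : R, `|th| <= `|d| /\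
    G (d *: u + y) - G y = derive G (th *: u + y) u * d.
Proof.
move=> sG.
have dG (b : R) : is_derive b (1 : R) (fun c : R => G (c *: u + y)) (derive G (b *: u + y) u).
  by apply: line_deriv; apply: smooth_der.
have cG : {within `[0, d], continuous (fun c : R => G (c *: u + y))}.
  by apply: continuous_subspaceT; apply: cont_line; apply: smooth_cont.
have cG' : {within `[d, 0], continuous (fun c : R => G (c *: u + y))}.
  by apply: continuous_subspaceT; apply: cont_line; apply: smooth_cont.
have [d0|d0] := leP 0 d.
  have [c] := MVT_segment d0 (fun x _ => dG x) cG.
  rewrite in_itv /= => /andP [c0 cd]; rewrite scale0r add0r subr0 => E.
  exists c; split; last by [].
  by rewrite (ger0_norm c0) (ger0_norm d0).
have [c] := MVT_segment (ltW d0) (fun x _ => dG x) cG'.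
rewrite in_itv /= => /andP [dc c0]; rewrite scale0r add0r sub0r => E.
exists c; split.
  rewrite (ler0_norm c0) (ltr0_norm d0) lerN2 //.
by apply: oppr_inj; rewrite opprB E mulrN.
Qed.


Lemma chain_cvg (V U : normedModType R) (G : U -> R) (A : V -> U) (s : V -> R) (u : U) q v :
  smooth G -> continuous s -> derivable s q v -> linA A ->
  (fun h : R => h^-1 *: ((fun x => G (A x + s x *: u)) \o shift q) (h *: v)
     - h^-1 *: G (A q + s q *: u)) @ 0^' -->
  derive G (A q + s q *: u) u * derive s q v + derive G (A q + s q *: u) (A v).
Proof.
move=> sG cs ds lA.
set p := A q + s q *: u.
pose z h := h *: A v + p.
pose dl h := s (h *: v + q) - s q.
have Heq h : A (h *: v + q) + s (h *: v + q) *: u = dl h *: u + z h.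
  rewrite /dl /z /p lA scalerBl.
  exact: zmod_rearr.
have [th Hth] := choice (fun h => @mvt_line U G u (z h) (dl h) sG).
have E h : h^-1 *: ((fun x => G (A x + s x *: u)) \o shift q) (h *: v) - h^-1 *: G p
   = derive G (th h *: u + z h) u * (h^-1 * dl h) + h^-1 *: (G (z h) - G p).
  rewrite /= Heq -scalerBr.
  have -> : G (dl h *: u + z h) - G p = (G (dl h *: u + z h) - G (z h)) + (G (z h) - G p).
    exact: zmod_split.
  by rewrite scalerDr (Hth h).2 /GRing.scale /= mulrCA.
rewrite (funext E).
apply: cvgD; last first.
  exact: (smooth_der sG p (A v)).
apply: cvgM; last first.
  exact: ds.
have dl0 : dl @ 0^' --> 0.
  have cl : {for 0, continuous (fun h : R => s (h *: v + q))}.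
    apply: continuous_comp; last exact: cs.
    apply: continuousD; last exact: cvg_cst.
    exact: continuousZr_tmp.
  have := (continuous_withinNx _ _).1 cl.
  rewrite scale0r add0r => H.
  rewrite -[X in _ --> X](subrr (s q)); exact: (cvgB H (cvg_cst (s q))).
have th0 : th @ 0^' --> 0.
  apply/cvgr0Pnorm_le => e e0.
  move/cvgr0Pnorm_le : dl0 => /(_ e e0).
  apply: filterS => h /= Hh.
  exact: le_trans (Hth h).1 Hh.
have k0 : (fun h => th h *: u + z h) @ 0^' --> p.
  rewrite -[p](add0r) -[X in X + _](scale0r u).
  apply: cvgD; first exact: cvgZr_tmp.
  rewrite /z -[X in _ --> X](add0r p) -[X in X + _](scale0r (A v)).
  apply: cvgD; last exact: cvg_cst.
  apply: cvgZr_tmp.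
  apply: cvg_within_filter.
  exact: cvg_id.
exact: (cvg_comp (fun h => th h *: u + z h) (fun y => derive G y u) k0
  (smooth_cont (smooth_D u sG) p)).
Qed.

End Chain.
Arguments chain_cvg {R V U G A s u q v}.


Section Cl.
Variable R : realType.

Lemma comp_der_ (V U : normedModType R) (G : U -> R) (A : V -> U) (s : V -> R) (u : U) q v :
  smooth G -> continuous s -> derivable s q v -> linA A ->
  derivable (fun x => G (A x + s x *: u)) q v /\
  derive (fun x => G (A x + s x *: u)) q v =
  derive G (A q + s q *: u) u * derive s q v + derive G (A q + s q *: u) (A v).
Proof.
move=> sG cs ds lA.
have H := chain_cvg (u:=u) sG cs ds lA.
have E : (fun h : R => h^-1 *: (((fun x => G (A x + s x *: u)) \o shift q) (h *: v)
     - G (A q + s q *: u))) =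
   (fun h : R => h^-1 *: ((fun x => G (A x + s x *: u)) \o shift q) (h *: v)
     - h^-1 *: G (A q + s q *: u)).
  by apply/funext => h; rewrite scalerBr.
split; first by rewrite /derivable E; exact: (cvgP _ H).
by rewrite /derive E; apply: cvg_lim; [exact: Rhausdorff | exact: H].
Qed.

Arguments comp_der_ {V U G A s} u {q v}.
Notation comp_der := comp_der_.

Inductive Cl (V : normedModType R) : (V -> R) -> Prop :=
| Cl_sm (f : V -> R) : smooth f -> Cl V f
| Cl_comp (U : normedModType R) (G : U -> R) (A : V -> U) (s : V -> R) (u : U) :
    smooth G -> smooth s -> linA A -> continuous A -> Cl V (fun x => G (A x + s x *: u))
| Cl_add (f g : V -> R) : Cl V f -> Cl V g -> Cl V (fun x => f x + g x)
| Cl_mul (f g : V -> R) : Cl V f -> Cl V g -> Cl V (fun x => f x * g x).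
Arguments Cl {V}.
Arguments Cl_sm {V f}.
Arguments Cl_comp {V U G A s} u.
Arguments Cl_add {V f g}.
Arguments Cl_mul {V f g}.

Lemma Cl_prop (V : normedModType R) (f : V -> R) : Cl f ->
  [/\ continuous f, forall x v, derivable f x v & forall v, Cl (fun x => derive f x v)].
Proof.
elim => {f}.
- move=> f sf; split; [exact: smooth_cont sf | exact: smooth_der sf |].
  by move=> v; apply: Cl_sm; apply: smooth_D.
- move=> U G A s u sG ss lA cA; split.
  + move=> x; apply: continuous_comp; last exact: (smooth_cont sG _).
    apply: continuousD; first exact: cA.
    by apply: continuousZr_tmp; exact: (smooth_cont ss x).
  + by move=> x v; have [] := comp_der u sG (smooth_cont ss) (smooth_der ss x v) lA.
  + move=> v.
    have -> : (fun x => derive (fun x0 => G (A x0 + s x0 *: u)) x v) =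
      (fun x => (fun y => derive G (A y + s y *: u) u) x * derive s x v
        + (fun y => derive G (A y + s y *: u) (A v)) x).
      apply/funext => x.
      by have [] := comp_der u sG (smooth_cont ss) (smooth_der ss x v) lA.
    apply: Cl_add; last exact: Cl_comp (smooth_D _ sG) ss lA cA.
    apply: Cl_mul; first exact: Cl_comp (smooth_D _ sG) ss lA cA.
    by apply: Cl_sm; apply: smooth_D.
- move=> f g _ [cf df Df] _ [cg dg Dg]; split.
  + by move=> x; exact: (continuousD (cf x) (cg x)).
  + by move=> x v; exact: (derivableD (df x v) (dg x v)).
  + move=> v.
    have -> : (fun x => derive (fun y => f y + g y) x v) =
      (fun x => derive f x v + derive g x v).
      by apply/funext => x; exact: (deriveD (df x v) (dg x v)).
    exact: Cl_add.
- move=> f g Cf [cf df Df] Cg [cg dg Dg]; split.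
  + by move=> x; exact: (continuousM (cf x) (cg x)).
  + by move=> x v; exact: (derivableM (df x v) (dg x v)).
  + move=> v.
    have -> : (fun x => derive (fun y => f y * g y) x v) =
      (fun x => f x * derive g x v + g x * derive f x v).
      by apply/funext => x; exact: (deriveM (df x v) (dg x v)).
    by apply: Cl_add; apply: Cl_mul.
Qed.

Lemma Cl_smooth (V : normedModType R) (f : V -> R) : Cl f -> smooth f.
Proof. by apply: smoothP => g /Cl_prop. Qed.

End Cl.
Arguments Cl {R V}.
Arguments Cl_sm {R V f}.
Arguments Cl_comp {R V U G A s} u.
Arguments Cl_add {R V f g}.
Arguments Cl_mul {R V f g}.


Section Lin.
Variable R : realType.

Lemma lin_der (V W : normedModType R) (A : V -> W) x v : linA A ->
  derivable A x v /\ derive A x v = A v.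
Proof.
move=> lA.
have H : (fun h : R => h^-1 *: ((A \o shift x) (h *: v) - A x)) @ 0^' --> A v.
  apply: cvg_near_cst; near=> h.
  rewrite /= lA addrK scalerA mulVf ?scale1r //.
  near: h; exact: nbhs_dnbhs_neq.
split; first exact: (cvgP _ H).
by apply: cvg_lim; [exact: norm_hausdorff | exact: H].
Unshelve. all: by end_near.
Qed.

Lemma lin_smooth (V W : normedModType R) (A : V -> W) :
  linA A -> continuous A -> smooth A.
Proof.
move=> lA cA.
apply: (smoothP (fun f => (linA f /\ continuous f) \/ exists c, f = cst c)); last by left.
move=> f [[lf cf]|[c ->]]; split.
- exact: cf.
- by move=> x v; have [] := @lin_der V W f x v lf.
- move=> v; right; exists (f v); apply/funext => x.
  by have [] := @lin_der V W f x v lf.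
- by move=> x; exact: cvg_cst.
- by move=> x v; exact: derivable_cst.
- by move=> v; right; exists 0; apply/funext => x; exact: derive_cst.
Qed.

Lemma smooth_add (V W : normedModType R) (f g : V -> W) :
  smooth f -> smooth g -> smooth (fun x => f x + g x).
Proof.
move=> sf sg.
apply: (smoothP (fun h => exists f g, [/\ smooth f, smooth g & h = (fun x => f x + g x)]));
  last by exists f, g.
move=> _ [f1 [g1 [sf1 sg1 ->]]]; split.
- by move=> x; exact: (continuousD (smooth_cont sf1 x) (smooth_cont sg1 x)).
- by move=> x v; exact: (derivableD (smooth_der sf1 x v) (smooth_der sg1 x v)).
- move=> v; exists (fun x => derive f1 x v), (fun x => derive g1 x v); split.
  + exact: smooth_D.
  + exact: smooth_D.
  + apply/funext => x; exact: (deriveD (smooth_der sf1 x v) (smooth_der sg1 x v)).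
Qed.

Lemma scal_der (V W : normedModType R) (a : V -> R) (c : W) x v :
  derivable a x v ->
  derivable (fun y => a y *: c) x v /\ derive (fun y => a y *: c) x v = derive a x v *: c.
Proof.
move=> da.
have E : (fun h : R => h^-1 *: (((fun y => a y *: c) \o shift x) (h *: v) - a x *: c)) =
  (fun h : R => (h^-1 *: ((a \o shift x) (h *: v) - a x)) *: c).
  by apply/funext => h /=; rewrite -scalerBl scalerA.
have H : (fun h : R => h^-1 *: (((fun y => a y *: c) \o shift x) (h *: v) - a x *: c))
   @ 0^' --> derive a x v *: c.
  by rewrite E; apply: cvgZr_tmp; exact: da.
split; first exact: (cvgP _ H).
by apply: cvg_lim; [exact: norm_hausdorff | exact: H].
Qed.

Lemma smooth_scal (V W : normedModType R) (a : V -> R) (c : W) :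
  smooth a -> smooth (fun x => a x *: c).
Proof.
move=> sa.
apply: (smoothP (fun h : V -> W => exists a0 : V -> R, smooth a0 /\ h = (fun x => a0 x *: c))); last by exists a.
move=> _ [a1 [sa1 ->]]; split.
- by move=> x; apply: continuousZr_tmp; exact: (smooth_cont sa1 x).
- by move=> x v; have [] := @scal_der V W a1 c x v (smooth_der sa1 x v).
- move=> v; exists (fun x => derive a1 x v); split; first exact: smooth_D.
  by apply/funext => x; have [] := @scal_der V W a1 c x v (smooth_der sa1 x v).
Qed.

End Lin.
Arguments lin_smooth {R V W A}.
Arguments smooth_add {R V W f g}.
Arguments smooth_scal {R V W a} c.
Arguments Cl_smooth {R V f}.


Section Main.
Variable R : realType.
Variable N : nat.
Local Notation X := 'rV[R]_N.+1.
Local Notation U := (X * R)%type.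
Local Notation V := ((X * X) * R)%type.

Definition e1 : X := delta_mx 0 ord0.
Definition uu : U := (e1, 0).
Definition A1 (q : V) : U := (q.1.1, q.2).
Definition A2 (q : V) : U := (q.1.2, q.2).
Definition Gc (p : U) : R := - p.1 ord0 ord0.

Lemma pairE (x : X) (t c : R) : (x, t) + c *: uu = (x + c *: e1, t).
Proof. by apply: injective_projections => //=; rewrite scaler0 addr0. Qed.

Lemma e1E : e1 ord0 ord0 = 1.
Proof. by rewrite /e1 mxE !eqxx. Qed.

Lemma linA1 : linA A1.
Proof. by move=> a x y. Qed.
Lemma linA2 : linA A2.
Proof. by move=> a x y. Qed.
Lemma linGc : linA Gc.
Proof. by move=> a x y; rewrite /Gc /= !mxE opprD scalerN. Qed.

Lemma contA1 : continuous A1.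
Proof.
move=> q; rewrite /A1.
apply: (@cvg_pair _ _ _ (nbhs q) (nbhs q.1.1) (nbhs q.2)); last exact: cvg_snd.
by apply: (@continuous_comp _ _ _ fst fst); exact: cvg_fst.
Qed.
Lemma contA2 : continuous A2.
Proof.
move=> q; rewrite /A2.
apply: (@cvg_pair _ _ _ (nbhs q) (nbhs q.1.2) (nbhs q.2)); last exact: cvg_snd.
apply: (@continuous_comp _ _ _ fst snd); [exact: cvg_fst | exact: cvg_snd].
Qed.
Lemma contGc : continuous Gc.
Proof.
move=> p; apply: continuousN.
apply: (@continuous_comp _ _ _ fst (fun M : X => M ord0 ord0)); first exact: cvg_fst.
exact: coord_continuous.
Qed.


Variable F : U -> R.
Definition g (p : U) : R := F p + Gc p.
Definition ca (q : V) : R := g (A2 q).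
Definition cb (q : V) : R := g (A1 q + ca q *: uu).
Definition phi (q : V) : V := ((q.1.1 + ca q *: e1, q.1.2 + cb q *: e1), q.2).
Definition cb' (q : V) : R := - g (A1 q).
Definition ca' (q : V) : R := - g (A2 q + cb' q *: uu).
Definition psi (q : V) : V := ((q.1.1 + ca' q *: e1, q.1.2 + cb' q *: e1), q.2).

Lemma qE (q : V) : q = ((q.1.1, q.1.2), q.2).
Proof. by case: q => [[]]. Qed.

Lemma phiK : cancel phi psi.
Proof.
move=> q.
have h1 : cb' (phi q) = - cb q by rewrite /cb' /cb /A1 /= pairE.
have h2 : ca' (phi q) = - ca q by rewrite /ca' h1 /A2 /= pairE scaleNr addrK.
by rewrite /psi h1 h2 /= !scaleNr !addrK -qE.
Qed.

Lemma psiK : cancel psi phi.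
Proof.
move=> q.
have h1 : ca (psi q) = - ca' q by rewrite /ca' /ca /A2 /= pairE opprK.
have h2 : cb (psi q) = - cb' q by rewrite /cb h1 /A1 /= pairE (scaleNr (ca' q)) addrK /cb' opprK.
by rewrite /phi h1 h2 /= !scaleNr !addrK -qE.
Qed.


Lemma smooth_cst (W1 W2 : normedModType R) (c : W2) : smooth (fun _ : W1 => c).
Proof.
apply: (smoothP (fun f : W1 -> W2 => exists c, f = cst c)); last by exists c.
move=> _ [c0 ->]; split.
- by move=> x; exact: cvg_cst.
- by move=> x v; exact: derivable_cst.
- by move=> v; exists 0; apply/funext => x; exact: derive_cst.
Qed.

Lemma smooth_id (W : normedModType R) : smooth (fun x : W => x).
Proof. by apply: lin_smooth => // x; exact: cvg_id. Qed.

Definition c1 : V := ((e1, 0), 0).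
Definition c2 : V := ((0, e1), 0).

Lemma phiE : phi = (fun q => q + ca q *: c1 + cb q *: c2).
Proof.
apply/funext => q; rewrite /phi /c1 /c2.
apply: injective_projections => /=; last by rewrite !scaler0 !addr0.
by apply: injective_projections => /=; rewrite !scaler0 !addr0.
Qed.

Lemma psiE : psi = (fun q => q + ca' q *: c1 + cb' q *: c2).
Proof.
apply/funext => q; rewrite /psi /c1 /c2.
apply: injective_projections => /=; last by rewrite !scaler0 !addr0.
by apply: injective_projections => /=; rewrite !scaler0 !addr0.
Qed.

Hypothesis sF : smooth F.

Lemma sGc : smooth Gc.
Proof. exact: lin_smooth linGc contGc. Qed.

Lemma Cl_g (A : V -> U) (s : V -> R) : linA A -> continuous A -> smooth s ->
  Cl (fun q => g (A q + s q *: uu)).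
Proof.
move=> lA cA ss; rewrite /g.
apply: Cl_add; [exact: Cl_comp uu sF ss lA cA | exact: Cl_comp uu sGc ss lA cA].
Qed.

Lemma s_ca : smooth ca.
Proof.
have -> : ca = (fun q => g (A2 q + (fun _ => 0 : R) q *: uu)).
  by apply/funext => q; rewrite scale0r addr0.
by apply: Cl_smooth; apply: Cl_g; [exact: linA2 | exact: contA2 | exact: smooth_cst].
Qed.

Lemma s_cb : smooth cb.
Proof. by apply: Cl_smooth; apply: Cl_g; [exact: linA1 | exact: contA1 | exact: s_ca]. Qed.

Lemma s_cb' : smooth cb'.
Proof.
have -> : cb' = (fun q => (fun _ => -1 : R) q * g (A1 q + (fun _ => 0 : R) q *: uu)).
  by apply/funext => q; rewrite scale0r addr0 mulN1r.
apply: Cl_smooth; apply: Cl_mul; first by apply: Cl_sm; exact: smooth_cst.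
by apply: Cl_g; [exact: linA1 | exact: contA1 | exact: smooth_cst].
Qed.

Lemma s_ca' : smooth ca'.
Proof.
have -> : ca' = (fun q => (fun _ => -1 : R) q * g (A2 q + cb' q *: uu)).
  by apply/funext => q; rewrite mulN1r.
apply: Cl_smooth; apply: Cl_mul; first by apply: Cl_sm; exact: smooth_cst.
by apply: Cl_g; [exact: linA2 | exact: contA2 | exact: s_cb'].
Qed.

Lemma s_phi : smooth phi.
Proof.
rewrite phiE; apply: smooth_add; last exact: smooth_scal s_cb.
by apply: smooth_add; [exact: smooth_id | exact: smooth_scal s_ca].
Qed.

Lemma s_psi : smooth psi.
Proof.
rewrite psiE; apply: smooth_add; last exact: smooth_scal s_cb'.
by apply: smooth_add; [exact: smooth_id | exact: smooth_scal s_ca'].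
Qed.


Lemma FE (p : U) : F p = p.1 ord0 ord0 + g p.
Proof. by rewrite /g /Gc addrCA subrr addr0. Qed.

Lemma entryE (x : X) (c : R) : (x + c *: e1) ord0 ord0 = x ord0 ord0 + c.
Proof. by rewrite !mxE !eqxx mulr1. Qed.

Lemma w_phi (K : set U) (HK : forall p, ~ K p -> F p = p.1 ord0 ord0) (q : V) :
  (~ K (q.1.1 + ca q *: e1, q.2)) \/
  (~ K (q.1.2, q.2) /\ ~ K (q.1.2 + cb q *: e1, q.2)) ->
  F ((phi q).1.1, (phi q).2) - F ((phi q).1.2, (phi q).2) =
  q.1.1 ord0 ord0 - q.1.2 ord0 ord0.
Proof.
have g0 p : ~ K p -> g p = 0.
  by move=> /HK Fp; rewrite /g /Gc Fp subrr.
have cbE : cb q = g (q.1.1 + ca q *: e1, q.2) by rewrite /cb /A1 pairE.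
rewrite /phi /=.
case=> [nK|[nK1 nK2]].
- have cb0 : cb q = 0 by rewrite cbE g0.
  rewrite (HK _ nK) /= entryE cb0 scale0r addr0 FE /=.
  rewrite /ca /A2 opprD addrACA subrr addr0 //.
- have ca0 : ca q = 0 by rewrite /ca /A2 g0.
  rewrite (HK _ nK2) /= entryE FE /= ca0 scale0r addr0 -(addr0 q.1.1) -(scale0r e1) -ca0 -cbE.
  by rewrite ca0 scale0r addr0 opprD addrACA subrr addr0.
Qed.


Lemma cont_g : continuous g.
Proof. by move=> p; apply: continuousD; [exact: (smooth_cont sF p) | exact: contGc]. Qed.

Definition mK (r : U * R) : U := (r.1.1 - r.2 *: e1, r.1.2).
Definition mm (r : U * U) : V := ((r.1.1, r.2.1), r.1.2).

Lemma cont_mK : continuous mK.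
Proof.
move=> r; rewrite /mK.
apply: (@cvg_pair _ _ _ (nbhs r) (nbhs (r.1.1 - r.2 *: e1)) (nbhs r.1.2)).
  have h1 : (fun z : U * R => z.1.1) @ nbhs r --> r.1.1.
    by apply: (@continuous_comp _ _ _ fst fst); exact: cvg_fst.
  have h2 : (fun z : U * R => z.2 *: e1) @ nbhs r --> r.2 *: e1.
    by apply: cvgZr_tmp; exact: cvg_snd.
  exact: (cvgB h1 h2).
apply: (@continuous_comp _ _ _ fst snd); [exact: cvg_fst | exact: cvg_snd].
Qed.

Lemma cont_mm : continuous mm.
Proof.
move=> r; rewrite /mm.
apply: (@cvg_pair _ _ _ (nbhs r) (nbhs (r.1.1, r.2.1)) (nbhs r.1.2)).
  apply: (@cvg_pair _ _ _ (nbhs r) (nbhs r.1.1) (nbhs r.2.1)).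
    by apply: (@continuous_comp _ _ _ fst fst); exact: cvg_fst.
  by apply: (@continuous_comp _ _ _ snd fst); [exact: cvg_snd | exact: cvg_fst].
by apply: (@continuous_comp _ _ _ fst snd); [exact: cvg_fst | exact: cvg_snd].
Qed.

Lemma compact_part (K : set U) : compact K ->
  (forall p, ~ K p -> F p = p.1 ord0 ord0) ->
  exists Kc : set V, compact Kc /\ forall q, ~ Kc q ->
    F ((phi q).1.1, (phi q).2) - F ((phi q).1.2, (phi q).2) =
    q.1.1 ord0 ord0 - q.1.2 ord0 ord0.
Proof.
move=> cK HK.
have g0 p : ~ K p -> g p = 0.
  by move=> /HK Fp; rewrite /g /Gc Fp subrr.
have cgK : compact (g @` K).
  by apply: continuous_compact => //; apply: continuous_subspaceT; exact: cont_g.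
have [M0 [_ HM0]] := compact_bounded cgK.
pose M := `|M0| + 1.
have M0M : M0 < M by rewrite /M ltr_pwDr // ler_norm.
have M0' : 0 <= M by rewrite /M addr_ge0.
have Mb p : `|g p| <= M.
  case: (pselect (K p)) => Kp; first by apply: (HM0 M M0M); exists p.
  by rewrite g0 // normr0.
pose K1 := mK @` (K `*` `[- M, M]).
have cK1 : compact K1.
  apply: continuous_compact; first by apply: continuous_subspaceT; exact: cont_mK.
  by apply: compact_setX => //; exact: segment_compact.
have K1P (x : X) (t c : R) : K (x + c *: e1, t) -> `|c| <= M -> K1 (x, t).
  move=> Kx cM; exists ((x + c *: e1, t), c).
    by split => //=; rewrite in_itv /= -ler_norml.
  by rewrite /mK /= addrK.
exists (mm @` (K1 `*` K1)); split.
  apply: continuous_compact; first by apply: continuous_subspaceT; exact: cont_mm.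
  exact: compact_setX.
move=> q nKc; apply: (@w_phi K HK q).
case: (pselect (K (q.1.1 + ca q *: e1, q.2))) => Kx; last by left.
right.
have K1x : K1 (q.1.1, q.2) by apply: K1P Kx (Mb _).
split => Ky; apply: nKc; exists ((q.1.1, q.2), (q.1.2, q.2)); rewrite /mm /= -?qE //.
- split => //; apply: (K1P _ _ 0) => //; last by rewrite normr0.
  by rewrite scale0r addr0.
- by split => //; apply: K1P Ky (Mb _).
Qed.

End Main.

Theorem proposition6p6 (R : realType) (N : nat) (F : 'rV[R]_N.+1 * R -> R) :
  gen_family_knot F ->
  (exists K : set ('rV[R]_N.+1 * R), compact K /\
     forall p, ~ K p -> F p = p.1 ord0 ord0) ->
  let w := fun q : ('rV[R]_N.+1 * 'rV[R]_N.+1) * R =>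
             F (q.1.1, q.2) - F (q.1.2, q.2) in
  exists (phi : ('rV[R]_N.+1 * 'rV[R]_N.+1) * R -> ('rV[R]_N.+1 * 'rV[R]_N.+1) * R)
         (Phi : ('rV[R]_N.+1 * 'rV[R]_N.+1) * R -> 'rV[R]_N.+1 * 'rV[R]_N.+1),
    diffeomorphism phi /\
    (forall q, phi q = (Phi q, q.2)) /\
    exists K : set (('rV[R]_N.+1 * 'rV[R]_N.+1) * R), compact K /\
      forall q, ~ K q -> (w \o phi) q = q.1.1 ord0 ord0 - q.1.2 ord0 ord0.
Proof.
move=> [sF _ _ _ _] [K [cK HK]] w.
have [Kc [cKc HKc]] := @compact_part R N F sF K cK HK.
exists (@phi R N F), (fun q => (@phi R N F q).1); split.
  exists (@psi R N F); split; first exact: phiK.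
  split; first exact: psiK.
  by split; [exact: s_phi | exact: s_psi].
split; first by move=> q.
by exists Kc; split => // q nK; rewrite /w /=; exact: HKc.
Qed.
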